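(* Let $q=4$, let $k>0$ be an even integer, and let $g=S_{k+1}^2+S_{2k}^{q^k+1}$. For every $a\in\mathbb{F}_{q^{3k}}$ with $\operatorname{Tr}_{q^{3k}/q^k}(a)\neq 0$, there exists $y\in\mathbb{F}_{q^k}$ such that $x\mapsto \operatorname{Tr}_{q^{3k}/2}\bigl(a\,g(x+y)-a\,g(x)\bigr)$ is a nonzero constant function on $\mathbb{F}_{q^{3k}}$.
   Context: For a prime power $q$ with characteristic $p$ and positive integer $m$, $S_m=x+x^q+\cdots+x^{q^{m-1}}\in\mathbb{F}_p[x]$. For fields $\mathbb{F}_{Q^n}\supseteq\mathbb{F}_Q$, $\operatorname{Tr}_{Q^n/Q}(z)=z+z^Q+\cdots+z^{Q^{n-1}}$ is the trace map. *)

(* Defs.v *)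
From HB Require Import structures.
From mathcomp Require Import all_boot all_order all_algebra all_field.
Set Implicit Arguments. Unset Strict Implicit. Unset Printing Implicit Defensive.
Import GRing.Theory.
Local Open Scope ring_scope.

Definition Spoly (R : nzRingType) (q m : nat) (x : R) : R :=
  \sum_(i < m) x ^+ (q ^ i)%N.

Definition Tr (R : nzRingType) (Q n : nat) (z : R) : R :=
  \sum_(i < n) z ^+ (Q ^ i)%N.

Definition gfun (R : nzRingType) (k : nat) (x : R) : R :=
  (Spoly 4 k.+1 x) ^+ 2 + (Spoly 4 (2 * k) x) ^+ (4 ^ k + 1)%N.

(* Main.v *)
Require Import Defs.
From HB Require Import structures.
From mathcomp Require Import all_boot all_order all_algebra all_field.
From mathcomp Require Import zify ring.
Import GRing.Theory.
Local Open Scope ring_scope.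
Set Implicit Arguments. Unset Strict Implicit.

Section C2.
Variable R : comNzRingType.
Hypothesis h2 : (2%:R : R) = 0.

Lemma c2_dbl (x : R) : x + x = 0.
Proof. by rewrite -mulr2n -mulr_natr h2 mulr0. Qed.

Lemma c2_opp (x : R) : - x = x.
Proof. by apply/eqP; rewrite -subr_eq0 -opprD c2_dbl oppr0. Qed.

Lemma c2_sq (x y : R) : (x + y) ^+ 2 = x ^+ 2 + y ^+ 2.
Proof. by rewrite sqrrD mulr2n c2_dbl addr0. Qed.

Lemma c2_pow2 n (x y : R) : (x + y) ^+ (2 ^ n) = x ^+ (2 ^ n) + y ^+ (2 ^ n).
Proof.
elim: n x y => [|n IH] x y; first by rewrite expn0 !expr1.
by rewrite expnS !exprM c2_sq IH.
Qed.

Lemma c2_pow4 n (x y : R) : (x + y) ^+ (4 ^ n) = x ^+ (4 ^ n) + y ^+ (4 ^ n).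
Proof. by rewrite (_ : 4 ^ n = 2 ^ (2 * n))%N ?c2_pow2 // expnM. Qed.

Lemma c2_pow2_sum n m (F : 'I_m -> R) :
  (\sum_(i < m) F i) ^+ (2 ^ n) = \sum_(i < m) (F i) ^+ (2 ^ n).
Proof.
elim: m F => [|m IH] F.
  by rewrite !big_ord0 expr0n expn_eq0.
by rewrite !big_ord_recr /= c2_pow2 IH.
Qed.

Lemma c2_pow4_sum n m (F : 'I_m -> R) :
  (\sum_(i < m) F i) ^+ (4 ^ n) = \sum_(i < m) (F i) ^+ (4 ^ n).
Proof. by rewrite (_ : 4 ^ n = 2 ^ (2 * n))%N ?c2_pow2_sum // expnM. Qed.

Lemma Spoly_add m (x y : R) : Spoly 4 m (x + y) = Spoly 4 m x + Spoly 4 m y.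
Proof. by rewrite /Spoly -big_split; apply: eq_bigr => i _; apply: c2_pow4. Qed.

Lemma c2_shift n m (x : R) :
  (x ^+ (4 ^ n) + x) ^+ (4 ^ m) = x ^+ (4 ^ (n + m)) + x ^+ (4 ^ m).
Proof. by rewrite c2_pow4 -exprM -expnD. Qed.

End C2.

Lemma sum_split (R : nzRingType) n m (G : nat -> R) :
  \sum_(i < n + m) G i = \sum_(i < n) G i + \sum_(i < m) G (n + i)%N.
Proof. by rewrite big_split_ord. Qed.

Lemma size_h (L : fieldType) n :
  size (\sum_(r < n.+1) ('X^(2 ^ r) : {poly L})) = (2 ^ n).+1.
Proof.
elim: n => [|n IH]; first by rewrite big_ord1 size_polyXn.
rewrite big_ord_recr /= addrC size_addl size_polyXn // IH ltnS expnS.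
by rewrite mul2n -addnn -[X in (X < _)%N]addn0 ltn_add2l expn_gt0.
Qed.

Theorem mainTheorem2 (k : nat) (L : finFieldType)
  (hk : (0 < k)%N) (hev : ~~ odd k) (hL : #|L| = (4 ^ (3 * k))%N)
  (a : L) (ha : Tr (4 ^ k) 3 a != 0) :
  exists y : L, y ^+ (4 ^ k) = y /\
    exists c : L, c != 0 /\
      forall x : L, Tr 2 (6 * k) (a * gfun k (x + y) - a * gfun k x) = c.
Proof.
have pch : (2 \in [pchar L])%N.
  apply: (card_finPcharP (n := (6 * k)%N)) => //.
  by rewrite hL (_ : 4 = 2 ^ 2)%N // -expnM mulnA.
have h2 : (2%:R : L) = 0 := pcharf0 pch.
set Q := (4 ^ k)%N.
have hQ3 : forall x : L, x ^+ (Q * (Q * Q)) = x.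
  by move=> x; rewrite (_ : Q * (Q * Q) = #|L|)%N ?expf_card // hL /Q -!expnD; f_equal; lia.
have frobQ : forall x y : L, (x + y) ^+ Q = x ^+ Q + y ^+ Q := c2_pow4 h2 k.
have hQ2 : (2 ^ (2 * k) = Q)%N by rewrite expnM.
have SQ : forall y : L, y ^+ Q = y -> Spoly 4 (2 * k) y = 0.
  move=> y hy; rewrite /Spoly (_ : (2 * k = k + k)%N); last by lia.
  rewrite big_split_ord /= -[RHS](c2_dbl h2 (\sum_(i < k) y ^+ (4 ^ i))).
  congr (_ + _); apply: eq_bigr => i _; by rewrite expnD exprM hy.
have gdiff : forall x y : L, y ^+ Q = y ->
    gfun k (x + y) - gfun k x = (Spoly 4 k.+1 y) ^+ 2.
  move=> x y hy; rewrite /gfun !(Spoly_add h2) (SQ y hy) addr0 (c2_sq h2).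
  ring.
have T6 : forall w : L,
    Tr 2 (6 * k) w = Tr 2 (2 * k) (w + w ^+ Q + w ^+ (Q * Q)).
  move=> w; rewrite /Tr (_ : (6 * k = 2 * k + (2 * k + 2 * k))%N); last by lia.
  rewrite (sum_split _ _ (fun i => w ^+ (2 ^ i))) /=.
  rewrite (sum_split _ _ (fun i => w ^+ (2 ^ (2 * k + i)))) /=.
  rewrite addrA -!big_split /=; apply: eq_bigr => i _.
  rewrite !(c2_pow2 h2) -!exprM -!expnD.
  have e4 : forall n, (4 ^ n = 2 ^ (2 * n))%N by move=> n; rewrite expnM.
  rewrite /Q !e4 -!expnD; congr (_ + _ ^+ (2 ^ _)); lia.
set b := Tr Q 3 a.
have hb : b = a + a ^+ Q + a ^+ (Q * Q).
  by rewrite /b /Tr !big_ord_recr big_ord0 /= add0r expn0 expr1 expn1 -mulnn.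
have Tb : forall z : L, z ^+ Q = z -> Tr 2 (6 * k) (a * z) = Tr 2 (2 * k) (b * z).
  by move=> z hz; rewrite T6 hb !mulrDl !exprMn (exprM z) !hz.
have bQ : b ^+ Q = b.
  by rewrite hb !frobQ -!exprM -mulnA hQ3 addrC addrA.
have bnz : b != 0 by [].
pose KS := [set y : L | y ^+ Q == y].
pose T := fun y : L => Spoly 4 k y.
have TK : forall y : L, y ^+ Q = y -> (T y) ^+ Q = T y.
  move=> y hy; rewrite /T /Spoly (c2_pow4_sum h2); apply: eq_bigr => i _.
  by rewrite -exprM mulnC exprM hy.
have S1 : forall y : L, y ^+ Q = y -> Spoly 4 k.+1 y = T y + y.
  by move=> y hy; rewrite /Spoly big_ord_recr /= hy.
pose f := fun y : L => b * (T y + y) ^+ 2.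
have fK : forall y, y \in KS -> f y \in KS.
  move=> y; rewrite !inE => /eqP hy; apply/eqP.
  by rewrite /f exprMn bQ exprAC frobQ TK // hy.
have finj : {in KS &, injective f}.
  move=> y1 y2; rewrite !inE => /eqP h1 /eqP h1' /(mulfI bnz) e.
  have e2 : T y1 + y1 + (T y2 + y2) = 0.
    have : (T y1 + y1 + (T y2 + y2)) ^+ 2 == 0 by rewrite (c2_sq h2) e (c2_dbl h2).
    by rewrite expf_eq0 /= => /eqP.
  set d := y1 + y2.
  have Td : T d = d.
    rewrite /T /d (Spoly_add h2) -/(T y1) -/(T y2).
    apply/eqP; rewrite -subr_eq0 (c2_opp h2); apply/eqP; rewrite -[RHS]e2; ring.
  have hd : d ^+ Q = d by rewrite /d frobQ h1 h1'.
  have d4 : d ^+ 4 = d.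
    have [k' ek] : exists k', k = k'.+1 by exists k.-1; lia.
    have hd' : d ^+ (4 ^ k'.+1) = d by rewrite -ek.
    rewrite -{1 2}Td /T /Spoly ek (c2_pow4_sum h2 1) big_ord_recr big_ord_recl /=.
    rewrite -exprM -expnSr hd' addrC; congr (_ + _); apply: eq_bigr => i _.
    by rewrite -exprM -expnSr.
  have dall : forall i, d ^+ (4 ^ i) = d.
    by elim=> [|i IH]; rewrite ?expn0 ?expr1 // expnSr exprM IH d4.
  have Tz : T d = 0.
    rewrite /T /Spoly (eq_bigr (fun _ => d)); last by move=> i _; exact: dall.
    rewrite sumr_const card_ord -(odd_double_half k) (negbTE hev) add0n.
    by rewrite -muln2 mulnC mulrnA mulr2n (c2_dbl h2) mul0rn.
  have d0 : d = 0 by rewrite -Td.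
  by apply/eqP; rewrite -subr_eq0 (c2_opp h2) -/d d0.
have fsurj : f @: KS = KS.
  apply/eqP; rewrite eqEcard card_in_imset // leqnn andbT.
  by apply/subsetP => z0 /imsetP [y0 hy0 ->]; exact: fK.
have h2P : (2%:R : {poly L}) = 0.
  by rewrite -(rmorph_nat (@polyC L)) h2 rmorph0.
have [w wK wnz] : exists2 w, w \in KS & Tr 2 (2 * k) w != 0.
  case: (pickP (fun w => (w \in KS) && (Tr 2 (2 * k) w != 0))) => [w /andP[]|H].
    by exists w.
  exfalso.
  pose P : {poly L} := 'X^Q + 'X.
  have XQ : 'X^#|L| - 'X = P ^+ (4 ^ (k + k)) + P ^+ (4 ^ k) + P.
    rewrite (c2_opp h2P) hL /P !(c2_shift h2P).
    have -> : forall A B C D E : {poly L}, A + B + (C + D) + (D + E) = A + (B + C) + (D + D) + E.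
      by move=> A B C D E; ring.
    rewrite (_ : (k + (k + k) = 3 * k)%N); last by lia.
    by rewrite !(c2_dbl h2P) !addr0.
  have dv : P %| \prod_(x : L) ('X - x%:P).
    rewrite -finField_genPoly XQ.
    by apply: dvdp_add; [apply: dvdp_add|]; rewrite ?dvdpp //;
      apply: dvdp_exp (dvdpp _); rewrite expn_gt0.
  have [m Pm] := @dvdp_prod_XsubC _ _ _ (fun x => x) _ dv.
  set ms := mask m (index_enum L) in Pm.
  have ums : uniq ms by apply: mask_uniq; exact: index_enum_uniq.
  have Q1 : (1 < Q)%N by rewrite /Q -{1}(expn0 4) ltn_exp2l.
  have szP : size P = Q.+1.
    by rewrite /P size_addl size_polyXn // size_polyX ltnS.
  have szms : size ms = Q.
    by move: (eqp_size Pm); rewrite szP size_prod_XsubC => -[].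
  have msK : forall x, x \in ms -> x \in KS.
    move=> x xm; have : root P x by rewrite (eqp_root Pm) root_prod_XsubC.
    rewrite /root /P !hornerE inE addr_eq0 (c2_opp h2) => ->.
    done.
  have [n hn] : exists n, (2 * k = n.+1)%N by exists (2 * k).-1; lia.
  pose hp : {poly L} := \sum_(r < n.+1) 'X^(2 ^ r).
  have hpE : forall x, hp.[x] = Tr 2 (2 * k) x.
    move=> x; rewrite /hp /Tr hn horner_sum; apply: eq_bigr => i _.
    by rewrite hornerXn.
  have hpnz : hp != 0 by rewrite -size_poly_eq0 /hp size_h.
  have rts : all (root hp) ms.
    apply/allP => x /msK xK; rewrite /root hpE.
    by move: (H x); rewrite /= xK /= => /negbFE.
  have := max_poly_roots hpnz rts ums.
  rewrite szms /hp size_h ltnS -hQ2 hn expnS.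
  have := expn_gt0 2 n; lia.
have wI : w \in f @: KS by rewrite fsurj.
case/imsetP: wI => y yK wf.
have hy : y ^+ Q = y by move: yK; rewrite inE => /eqP.
exists y; split=> //.
exists (Tr 2 (6 * k) (a * (Spoly 4 k.+1 y) ^+ 2)); split.
  rewrite Tb; first by rewrite S1 // -/(f y) -wf.
  by rewrite exprAC S1 // frobQ TK // hy.
by move=> x; rewrite -mulrBr gdiff.
Qed.
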